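(* For $g\ge1$ and $n\ge1$, as modules over $\mathsf{Sp}(2g,2)$ we have $\Gamma(2g,2^n)/\Gamma(2g,2^n,2^{n+1})\cong U$ and $\Gamma(2g,2^n,2^{n+1})/\Gamma(2g,2^{n+1})\cong\Lambda^2(U)$.
   Context: $\mathsf{Sp}(2g,\mathbb Z)$ is the group of integer matrices $X$ with $X^tJX=J$, $J=\begin{pmatrix}0&I\\-I&0\end{pmatrix}$; $\mathsf{Sp}(2g,2)$ is the same over $\mathbb F_2$. $\Gamma(2g,N)$ is the kernel of $\mathsf{Sp}(2g,\mathbb Z)\to\mathsf{Sp}(2g,\mathbb Z/N)$. The Igusa subgroup $\Gamma(2g,N,2N)$ consists of the matrices $\begin{pmatrix}A&B\\C&D\end{pmatrix}\in\Gamma(2g,N)$ such that all diagonal entries of $AB^t$ and of $CD^t$ are divisible by $2N$. The quotients in question are elementary abelian $2$-groups on which $\mathsf{Sp}(2g,\mathbb Z)$ acts by conjugation, the action factoring through $\mathsf{Sp}(2g,2)$. $U=\mathbb F_2^{2g}$ is the natural module, and $\Lambda^2(U)\subseteq U\otimes U$ is the subspace spanned by the elements $u\otimes u'+u'\otimes u$. *)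

(* Defs.v *)
From HB Require Import structures.
From mathcomp Require Import all_boot all_order all_algebra.
Set Implicit Arguments. Unset Strict Implicit. Unset Printing Implicit Defensive.
Import Order.TTheory GRing.Theory Num.Theory.
Local Open Scope ring_scope.

Notation intmx g := 'M[int]_(g + g).

Definition Jmx (R : nzRingType) (g : nat) : 'M[R]_(g + g) :=
  block_mx 0 1%:M (- 1%:M) 0.

Definition Sp_Z (g : nat) (X : intmx g) : Prop :=
  X^T *m Jmx int g *m X = Jmx int g.

Definition Gamma (g : nat) (N : int) (X : intmx g) : Prop :=
  Sp_Z X /\ forall i j, (N %| X i j - (1%:M : intmx g) i j)%Z.

Definition Igusa (g : nat) (N : int) (X : intmx g) : Prop :=
  Gamma N X /\
  (forall i : 'I_g,
     (2 * N %| (ulsubmx X *m (ursubmx X)^T) i i)%Z /\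
     (2 * N %| (dlsubmx X *m (drsubmx X)^T) i i)%Z).

Definition red2 (g : nat) (X : intmx g) : 'M['F_2]_(g + g) :=
  map_mx (fun z : int => z%:~R) X.

Notation Umod g := 'cV['F_2]_(g + g).

(* U (x) U is identified with (2g x 2g) matrices over F_2 via
   u (x) u' |-> u *m u'^T; Lambda^2(U) is the subspace spanned by the
   elements u (x) u' + u' (x) u. *)
Definition Lambda2 (g : nat) (M : 'M['F_2]_(g + g)) : bool :=
  (mxvec M <= \sum_(u : Umod g) \sum_(v : Umod g)
                <<mxvec (u *m v^T + v *m u^T)>>)%MS.

(* Main.v *)
Require Import Defs.
From HB Require Import structures.
From mathcomp Require Import all_boot all_order all_algebra.
From mathcomp Require Import zify.
Set Implicit Arguments. Unset Strict Implicit. Unset Printing Implicit Defensive.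
Import Order.TTheory GRing.Theory Num.Theory.
Local Open Scope ring_scope.

Lemma F2_2 : ((2:int)%:~R : 'F_2) = 0. Proof. by apply/val_inj. Qed.
Lemma F2_xx (x : 'F_2) : x + x = 0. Proof. by case: x => [[|[|]]] //= ?; apply/val_inj. Qed.
Lemma F2_sq (x : 'F_2) : x * x = x. Proof. by case: x => [[|[|]]] //= ?; apply/val_inj. Qed.
Lemma F2_opp (x : 'F_2) : - x = x.
Proof. by apply/eqP; rewrite eq_sym -subr_eq0 opprK F2_xx. Qed.

Lemma F2_red0 (z : int) : ((z%:~R : 'F_2) == 0) = (2 %| z)%Z.
Proof.
rewrite {1}(divz_eq z 2) intrD intrM F2_2 mulr0 add0r.
have h1 := modz_ge0 z (d:=2) isT.
have h2 := ltz_pmod z (d:=2) isT.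
have : (z %% 2 = 0 \/ z %% 2 = 1)%Z by lia.
case=> h; rewrite h.
  by rewrite eqxx; apply/esym/dvdz_mod0P.
by apply/esym; apply/negbTE/negP => /dvdz_mod0P; rewrite h.
Qed.

Lemma F2_pow n : (0 < n)%N -> (((2:int) ^+ n)%:~R : 'F_2) = 0.
Proof. by case: n => // n _; rewrite exprS intrM F2_2 mul0r. Qed.

Lemma red2M g (A B : intmx g) : red2 (A *m B) = red2 A *m red2 B.
Proof. rewrite /red2. exact: map_mxM. Qed.
Lemma red2D g (A B : intmx g) : red2 (A + B) = red2 A + red2 B.
Proof. rewrite /red2. exact: map_mxD. Qed.
Lemma red2N g (A : intmx g) : red2 (- A) = - red2 A.
Proof. rewrite /red2. exact: map_mxN. Qed.
Lemma red2T g (A : intmx g) : red2 (A^T) = (red2 A)^T.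
Proof. by rewrite /red2 map_trmx. Qed.
Lemma red2E g (A : intmx g) i j : red2 A i j = (A i j)%:~R.
Proof. by rewrite /red2 mxE. Qed.
Lemma red2Z g n (A : intmx g) : (0 < n)%N -> red2 ((2:int) ^+ n *: A) = 0.
Proof. by move=> hn; apply/matrixP => i j; rewrite red2E !mxE intrM F2_pow // mul0r. Qed.
Lemma red2_0 g : red2 (0 : intmx g) = 0.
Proof. by apply/matrixP => i j; rewrite red2E !mxE. Qed.
Lemma red2_1 g : red2 (1%:M : intmx g) = 1%:M.
Proof. by apply/matrixP => i j; rewrite red2E !mxE; case: (i == j). Qed.

Lemma JJ (R : nzRingType) g : Jmx R g *m Jmx R g = - 1%:M.
Proof.
rewrite /Jmx mulmx_block !mul0mx !mulmx0 !mul1mx ?mulmxN !mulmx1 !addr0 !add0r. idtac.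
by rewrite (scalar_mx_block g g (1:R)) opp_block_mx !oppr0.
Qed.

Lemma JJi g : Jmx int g *m Jmx int g = - 1%:M.
Proof. exact: JJ. Qed.

Lemma JT (R : nzRingType) g : (Jmx R g)^T = - Jmx R g.
Proof.
by rewrite /Jmx tr_block_mx !trmx0 linearN /= trmx1 opp_block_mx !oppr0 opprK.
Qed.

Lemma JTi g : (Jmx int g)^T = - Jmx int g.
Proof. exact: JT. Qed.

Lemma sp_inv g (X : intmx g) : Sp_Z X ->
  X \in unitmx /\ invmx X = - (Jmx int g *m X^T *m Jmx int g).
Proof.
move=> hX.
set L := - (Jmx int g *m X^T *m Jmx int g).
have hL : L *m X = 1%:M.
  by rewrite /L mulNmx -!mulmxA (mulmxA _ _ X) hX JJi opprK.
have [_ Xu] := mulmx1_unit hL.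
split=> //.
by rewrite -[invmx X]mul1mx -hL -mulmxA mulmxV // mulmx1.
Qed.

Lemma sp_invJ g (X : intmx g) : Sp_Z X ->
  invmx X *m Jmx int g = Jmx int g *m X^T.
Proof.
by move=> /sp_inv [_ ->]; rewrite mulNmx -!mulmxA JJi !mulmxN mulmx1 opprK.
Qed.

Lemma sp_tr g (X : intmx g) : Sp_Z X -> X *m Jmx int g *m X^T = Jmx int g.
Proof.
move=> hX; have [Xu hi] := sp_inv hX.
have h := mulmxV Xu; rewrite hi in h.
transitivity ((X *m - (Jmx int g *m X^T *m Jmx int g)) *m Jmx int g).
  by rewrite mulmxN mulNmx -!mulmxA JJi !mulmxN mulmx1 opprK.
by rewrite h mul1mx.
Qed.

Definition quo g (N : int) (Y : intmx g) : intmx g :=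
  map_mx (fun z => (z %/ N)%Z) (Y - 1%:M).
Definition psiF g (N : int) (Y : intmx g) : 'M['F_2]_(g + g) :=
  red2 (quo N Y *m Jmx int g).
Definition phiF g (N : int) (Y : intmx g) : Umod g := \col_i psiF N Y i i.

Lemma gammaE g N (Y : intmx g) : Gamma N Y -> Y = 1%:M + N *: quo N Y.
Proof.
case=> _ h; apply/matrixP=> i j; have := h i j; rewrite !mxE => hd.
by rewrite mulrC divzK // addrC subrK.
Qed.

Lemma quoE g N (M : intmx g) : N != 0 -> quo N (1%:M + N *: M) = M.
Proof.
move=> hN; apply/matrixP=> i j; rewrite !mxE.
by rewrite (addrC (_%:R)) addrK mulKz.
Qed.

Lemma psi_of g N (M : intmx g) : N != 0 ->
  psiF N (1%:M + N *: M) = red2 (M *m Jmx int g).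
Proof. by move=> hN; rewrite /psiF quoE. Qed.

Lemma gamma_of g N (M : intmx g) :
  Sp_Z (1%:M + N *: M) -> Gamma N (1%:M + N *: M).
Proof.
move=> h; split=> // i j; rewrite !mxE (addrC (_%:R)) addrK.
exact: dvdz_mulr (dvdzz _).
Qed.

Lemma spM g (X Y : intmx g) : Sp_Z X -> Sp_Z Y -> Sp_Z (X *m Y).
Proof.
rewrite /Sp_Z => hX hY.
by rewrite trmx_mul -!mulmxA (mulmxA X^T) (mulmxA _ X) hX mulmxA.
Qed.

Lemma prodE g N (M K : intmx g) :
  (1%:M + N *: M) *m (1%:M + N *: K) = 1%:M + N *: (M + K + N *: (M *m K)).
Proof.
rewrite mulmxDl !mulmxDr !mul1mx mulmx1 -scalemxAl -scalemxAr scalerA.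
rewrite !scalerDr scalerA; rewrite -!addrA; congr (_ + _).
by rewrite addrC -addrA; congr (_ + _); rewrite addrC.
Qed.

Lemma pow2_neq0 n : ((2:int) ^+ n) != 0.
Proof. by rewrite expf_neq0. Qed.

Lemma F2mxN m p (A : 'M['F_2]_(m, p)) : - A = A.
Proof. by apply/matrixP=> i j; rewrite mxE F2_opp. Qed.

Lemma psi_sym g n (Y : intmx g) : (0 < n)%N -> Gamma (2 ^+ n) Y ->
  (psiF (2 ^+ n) Y)^T = psiF (2 ^+ n) Y.
Proof.
move=> hn hY; have hS := sp_tr hY.1.
move: hY; move/gammaE => E; rewrite E in hS.
rewrite E psi_of ?pow2_neq0 //.
set N : int := 2 ^+ n in hS *; set M := quo N Y in hS *.
set J := Jmx int g in hS *.
have e : N *: (M *m J + J *m M^T + N *: (M *m J *m M^T)) = 0.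
  move: hS; rewrite linearD /= trmx1 linearZ /= mulmxDl !mulmxDr !mul1mx mulmx1.
  move/(congr1 (fun A => A - J)); rewrite subrr => <-.
  rewrite mulmxDl -!scalemxAl -!scalemxAr scalerA.
  by rewrite -(addrA J) [RHS]addrC addKr !scalerDr scalerA addrA.
move/eqP: e; rewrite scalemx_eq0 (negbTE (pow2_neq0 n)) /= => /eqP e.
have := congr1 (@red2 g) e; rewrite !red2D red2Z // addr0 red2_0 => /eqP.
rewrite addr_eq0 F2mxN => /eqP h.
by rewrite -red2T trmx_mul JT mulNmx red2N F2mxN h.
Qed.

Lemma gammaM g n (Y Z : intmx g) : Gamma (2 ^+ n) Y -> Gamma (2 ^+ n) Z ->
  Gamma (2 ^+ n) (Y *m Z).
Proof.
move=> hY hZ; have hS := spM hY.1 hZ.1.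
rewrite (gammaE hY) (gammaE hZ) prodE in hS *; exact: gamma_of hS.
Qed.

Lemma psi_hom g n (Y Z : intmx g) : (0 < n)%N -> Gamma (2 ^+ n) Y -> Gamma (2 ^+ n) Z ->
  psiF (2 ^+ n) (Y *m Z) = psiF (2 ^+ n) Y + psiF (2 ^+ n) Z.
Proof.
move=> hn hY hZ; rewrite {1}(gammaE hY) {1}(gammaE hZ) prodE psi_of ?pow2_neq0 //.
rewrite /psiF.
by rewrite !mulmxDl !red2D -scalemxAl red2Z // addr0.
Qed.

Lemma psi_conj g n (X Y : intmx g) : Sp_Z X -> Gamma (2 ^+ n) Y ->
  psiF (2 ^+ n) (X *m Y *m invmx X) = red2 X *m psiF (2 ^+ n) Y *m (red2 X)^T.
Proof.
move=> hX hY; have [Xu _] := sp_inv hX.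
rewrite {1}(gammaE hY) mulmxDr mulmx1 mulmxDl mulmxV // -scalemxAr -scalemxAl.
rewrite psi_of ?pow2_neq0 // /psiF.
by rewrite -mulmxA sp_invJ // !mulmxA !red2M red2T !mulmxA.
Qed.

Lemma dvd2pow n (q : int) : (2 * 2 ^+ n %| q * 2 ^+ n)%Z = (2 %| q)%Z.
Proof. exact: dvdz_mul2r (pow2_neq0 n). Qed.
Lemma dvd2powl n (q : int) : (2 * 2 ^+ n %| 2 ^+ n * q)%Z = (2 %| q)%Z.
Proof. by rewrite (mulrC (2 ^+ n) q); exact: dvdz_mul2r (pow2_neq0 n). Qed.

Lemma psi_ker g n (Y : intmx g) : (0 < n)%N -> Gamma (2 ^+ n) Y ->
  (psiF (2 ^+ n) Y = 0 <-> Gamma (2 ^+ n.+1) Y).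
Proof.
move=> hn hY; have hS := hY.1.
rewrite /psiF.
set M := quo _ Y.
have -> : (red2 (M *m Jmx int g) = 0) <-> (red2 M = 0).
  split=> h.
    have := congr1 (mulmx^~ (red2 (Jmx int g))) h.
    by rewrite mul0mx -red2M -mulmxA JJi mulmxN mulmx1 red2N F2mxN.
  by rewrite red2M h mul0mx.
split.
  move=> h; split; first exact: hS.
  move=> i j; rewrite {1}(gammaE hY) !mxE (addrC (_%:R)) addrK exprS.
  rewrite dvd2powl -F2_red0.
  by have := congr1 (fun A : 'M['F_2]_(g+g) => A i j) h; rewrite red2E !mxE => ->.
case=> _ h; apply/matrixP=> i j; rewrite red2E !mxE; apply/eqP; rewrite F2_red0.
have := h i j; rewrite {1}(gammaE hY) !mxE (addrC (_%:R)) addrK exprS.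
by rewrite dvd2powl.
Qed.

Lemma MJ_l g (M : intmx g) i : (M *m Jmx int g) (lshift g i) (lshift g i) = - ursubmx M i i.
Proof.
rewrite -{1}(submxK M) /Jmx mulmx_block block_mxEul.
by rewrite mulmx0 add0r mulmxN mulmx1 mxE.
Qed.

Lemma MJ_r g (M : intmx g) i : (M *m Jmx int g) (rshift g i) (rshift g i) = dlsubmx M i i.
Proof.
rewrite -{1}(submxK M) /Jmx mulmx_block block_mxEdr.
by rewrite mulmx0 addr0 mulmx1.
Qed.

Lemma ulY g N (M : intmx g) : ulsubmx (1%:M + N *: M) = 1%:M + N *: ulsubmx M.
Proof. by apply/matrixP=> i j; rewrite !mxE eq_lshift. Qed.
Lemma urY g N (M : intmx g) : ursubmx (1%:M + N *: M) = N *: ursubmx M.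
Proof. by apply/matrixP=> i j; rewrite !mxE eq_lrshift add0r. Qed.
Lemma dlY g N (M : intmx g) : dlsubmx (1%:M + N *: M) = N *: dlsubmx M.
Proof. by apply/matrixP=> i j; rewrite !mxE eq_rlshift add0r. Qed.
Lemma drY g N (M : intmx g) : drsubmx (1%:M + N *: M) = 1%:M + N *: drsubmx M.
Proof. by apply/matrixP=> i j; rewrite !mxE eq_rshift. Qed.

Lemma igusa_char g n (Y : intmx g) : (0 < n)%N -> Gamma (2 ^+ n) Y ->
  (Igusa (2 ^+ n) Y <-> forall k, psiF (2 ^+ n) Y k k = 0).
Proof.
move=> hn hY.
have E := gammaE hY.
set M := quo _ Y in E.
have h1 : forall i, (2 * 2 ^+ n %| (ulsubmx Y *m (ursubmx Y)^T) i i)%Z <->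
                    psiF (2 ^+ n) Y (lshift g i) (lshift g i) = 0.
  move=> i; rewrite /psiF red2E MJ_l -/M.
  rewrite E ulY urY linearZ /= -scalemxAr mulmxDl mul1mx -scalemxAl mxE.
  rewrite dvd2powl -F2_red0 mxE [X in X + _]mxE [X in _ + X]mxE.
  rewrite intrD intrM F2_pow // mul0r addr0 intrN.
  by split=> [/eqP ->|/eqP]; rewrite ?oppr0 // oppr_eq0.
have h2 : forall i, (2 * 2 ^+ n %| (dlsubmx Y *m (drsubmx Y)^T) i i)%Z <->
                    psiF (2 ^+ n) Y (rshift g i) (rshift g i) = 0.
  move=> i; rewrite /psiF red2E MJ_r -/M.
  rewrite E dlY drY linearD /= trmx1 linearZ /= -scalemxAl mulmxDr mulmx1 -scalemxAr mxE.
  rewrite dvd2powl -F2_red0 mxE [X in _ + X]mxE.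
  rewrite intrD intrM F2_pow // mul0r addr0.
  by split=> /eqP.
split.
  case=> _ h k; case: (split_ordP k) => i ->; have [a b] := h i.
    by apply/h1.
  by apply/h2.
move=> h; split=> // i; split; [apply/h1 | apply/h2]; exact: h.
Qed.

Lemma diag_conj m (P T : 'M['F_2]_m) : T^T = T ->
  \col_i (P *m T *m P^T) i i = P *m \col_k T k k.
Proof.
move=> hT.
set L : 'M['F_2]_m := \matrix_(k, l) if (l < k)%N then T k l else 0.
set D : 'M['F_2]_m := diag_mx (\row_k T k k).
have eT : T = D + (L + L^T).
  apply/matrixP=> k l; rewrite !mxE.
  case: (ltngtP k l) => hkl.
  - by rewrite -val_eqE /= (ltn_eqF hkl) mulr0n !add0r -{1}hT mxE.
  - by rewrite -val_eqE /= (gtn_eqF hkl) mulr0n add0r addr0.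
  - have -> : k = l by apply: val_inj.
    by rewrite eqxx mulr1n !addr0.
apply/matrixP=> i j; rewrite (ord1 j) {j}.
have addE : forall (A B : 'M['F_2]_m) a b, (A + B) a b = A a b + B a b.
  by move=> *; rewrite mxE.
rewrite {1}eT mulmxDr mulmxDl mulmxDr mulmxDl [LHS]mxE !addE.
have -> : P *m L^T *m P^T = (P *m L *m P^T)^T.
  by rewrite !trmx_mul trmxK mulmxA.
rewrite [(P *m L *m P^T)^T i i]mxE F2_xx addr0 !mxE.
apply: eq_bigr => l _; rewrite !mxE.
rewrite (bigD1 l) //= big1 ?addr0; last first.
  move=> k hk; rewrite !mxE; case: eqP hk => [->|_ _] //.
  by rewrite mulr0.
by rewrite /D !mxE eqxx mulr1n mulrAC F2_sq.
Qed.

Definition tv g (N : int) (w : 'cV[int]_(g + g)) : intmx g :=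
  1%:M + N *: (w *m w^T *m Jmx int g).

Lemma wJw g (w : 'cV[int]_(g + g)) : w^T *m Jmx int g *m w = 0.
Proof.
set x := w^T *m Jmx int g *m w.
have hx : x^T = - x by rewrite /x !trmx_mul trmxK JTi mulNmx mulmxN mulmxA.
apply/matrixP=> i j; rewrite (ord1 i) (ord1 j) mxE.
have := congr1 (fun A : 'M[int]_1 => A 0 0) hx; rewrite !mxE => /eqP.
by rewrite -addr_eq0 -mulr2n -mulr_natr mulf_eq0 orbF => /eqP.
Qed.

Lemma tv_sp g N (w : 'cV[int]_(g + g)) : Sp_Z (tv N w).
Proof.
rewrite /Sp_Z /tv [(1%:M + _)^T]linearD /= trmx1 [(N *: _)^T]linearZ /= !trmx_mul trmxK JTi.
set J := Jmx int g.
have q : J *m (w *m w^T) *m J *m (w *m w^T *m J) = 0.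
  by rewrite -!mulmxA (mulmxA w^T) (mulmxA _ w) wJw mul0mx !mulmx0.
rewrite mulmxDl mul1mx !mulmxDr mulmx1 -!scalemxAl -!scalemxAr.
rewrite mulmxDl -scalemxAl !mulNmx q oppr0 scaler0 addr0.
by rewrite -addrA -scalerDr !mulmxA addNr scaler0 addr0.
Qed.

Definition liftF k (u : 'cV['F_2]_k) : 'cV[int]_k :=
  map_mx (fun x : 'F_2 => ((x : nat) : int)) u.

Lemma map_lift k (u : 'cV['F_2]_k) :
  map_mx (fun z : int => (z%:~R : 'F_2)) (liftF u) = u.
Proof.
apply/matrixP=> i j; rewrite !mxE.
by case: (u i j) => [[|[|]]] //= ?; apply/val_inj.
Qed.

Lemma psi_tv g n (w : 'cV[int]_(g + g)) : (0 < n)%N ->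
  psiF (2 ^+ n) (tv (2 ^+ n) w) =
  map_mx (fun z : int => (z%:~R : 'F_2)) w *m (map_mx (fun z : int => (z%:~R : 'F_2)) w)^T.
Proof.
move=> hn; rewrite /tv psi_of ?pow2_neq0 // -mulmxA JJi mulmxN mulmx1 red2N F2mxN.
by rewrite /red2 map_mxM map_trmx.
Qed.

Lemma gamma_tv g n (w : 'cV[int]_(g + g)) : Gamma (2 ^+ n) (tv (2 ^+ n) w).
Proof. exact: gamma_of (tv_sp _ _). Qed.

Lemma part1 g n : (0 < n)%N ->
  (exists phi : intmx g -> Umod g,
     [/\ (forall Y Z, Gamma (2 ^+ n) Y -> Gamma (2 ^+ n) Z ->
            phi (Y *m Z) = phi Y + phi Z),
         (forall u : Umod g, exists2 Y, Gamma (2 ^+ n) Y & phi Y = u),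
         (forall Y, Gamma (2 ^+ n) Y -> (phi Y = 0 <-> Igusa (2 ^+ n) Y)) &
         (forall X Y, Sp_Z X -> Gamma (2 ^+ n) Y ->
            phi (X *m Y *m invmx X) = red2 X *m phi Y)]).
Proof.
move=> hn; exists (phiF (2 ^+ n)); split.
- move=> Y Z hY hZ; by rewrite /phiF psi_hom //; apply/matrixP=> i j; rewrite !mxE.
- move=> u; exists (tv (2 ^+ n) (liftF u)); first exact: gamma_tv.
  rewrite /phiF psi_tv // map_lift; apply/matrixP=> i j.
  by rewrite (ord1 j) !mxE big_ord1 !mxE F2_sq.
- move=> Y hY; rewrite igusa_char //; split.
    by move=> h k; have := congr1 (fun A : Umod g => A k 0) h; rewrite !mxE.
  by move=> h; apply/matrixP=> i j; have := h i; rewrite (ord1 j) !mxE => ->.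
- move=> X Y hX hY; rewrite /phiF psi_conj //; apply: diag_conj.
  exact: psi_sym.
Qed.

Lemma igusaM g n (Y Z : intmx g) : (0 < n)%N -> Igusa (2 ^+ n) Y -> Igusa (2 ^+ n) Z ->
  Igusa (2 ^+ n) (Y *m Z).
Proof.
move=> hn hY hZ; have gY := hY.1; have gZ := hZ.1.
have gYZ := gammaM gY gZ.
apply/(igusa_char hn gYZ) => k; rewrite psi_hom // mxE.
by rewrite (proj1 (igusa_char hn gY) hY) (proj1 (igusa_char hn gZ) hZ) addr0.
Qed.

Lemma igusa1 g n : (0 < n)%N -> Igusa (2 ^+ n) (1%:M : intmx g) /\ psiF (2 ^+ n) (1%:M : intmx g) = 0.
Proof.
move=> hn.
have e : (1%:M : intmx g) = 1%:M + 2 ^+ n *: 0 by rewrite scaler0 addr0.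
have p0 : psiF (2 ^+ n) (1%:M : intmx g) = 0.
  by rewrite {1}e psi_of ?pow2_neq0 // mul0mx red2_0.
have g1 : Gamma (2 ^+ n) (1%:M : intmx g).
  rewrite e; apply: gamma_of; rewrite -e /Sp_Z trmx1 mul1mx mulmx1 //.
split=> //; apply/(igusa_char hn g1) => k; by rewrite p0 mxE.
Qed.

Lemma F2_gen_id (a b c d : 'F_2) : (a + b) * (c + d) + a * c + b * d = a * d + b * c.
Proof.
by move: a b c d => [[|[|]] ?] // [[|[|]] ?] // [[|[|]] ?] // [[|[|]] ?] //; apply/val_inj.
Qed.

Lemma gen g n (u v : Umod g) : (0 < n)%N ->
  exists2 Y, Igusa (2 ^+ n) Y & psiF (2 ^+ n) Y = u *m v^T + v *m u^T.
Proof.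
move=> hn.
set A := tv (2 ^+ n) (liftF u + liftF v).
set B := tv (2 ^+ n) (liftF u); set C := tv (2 ^+ n) (liftF v).
have gA : Gamma (2 ^+ n) A by apply: gamma_tv.
have gB : Gamma (2 ^+ n) B by apply: gamma_tv.
have gC : Gamma (2 ^+ n) C by apply: gamma_tv.
have gABC := gammaM (gammaM gA gB) gC.
have ps : psiF (2 ^+ n) (A *m B *m C) = u *m v^T + v *m u^T.
  rewrite psi_hom // ?psi_hom //; last exact: gammaM.
  rewrite /A /B /C !psi_tv // map_mxD !map_lift.
  apply/matrixP=> i j; rewrite !mxE !big_ord1 !mxE.
  exact: F2_gen_id.
exists (A *m B *m C) => //.
apply/(igusa_char hn gABC) => k; rewrite ps !mxE !big_ord1 !mxE.
by rewrite (mulrC (v k 0)) F2_xx.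
Qed.

Lemma lam_gen g (u v : Umod g) : Lambda2 (u *m v^T + v *m u^T).
Proof.
rewrite /Lambda2; apply: (sumsmx_sup u) => //; apply: (sumsmx_sup v) => //.
by rewrite genmxE.
Qed.

Lemma alt_lam g (T : 'M['F_2]_(g + g)) : T^T = T -> (forall k, T k k = 0) -> Lambda2 T.
Proof.
move=> hT hd.
set L : 'M['F_2]_(g + g) := \matrix_(k, l) if (l < k)%N then T k l else 0.
have eT : T = \sum_i (delta_mx i 0 *m ((row i L)^T)^T + (row i L)^T *m (delta_mx i 0)^T).
  apply/matrixP=> k l; rewrite summxE.
  under eq_bigr => i _ do rewrite !mxE !big_ord1 !mxE.
  rewrite big_split /= (bigD1 k) //= big1 ?addr0; last first.
    by move=> i hi; rewrite (negbTE (_ : k != i)) 1?eq_sym //= mul0r.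
  rewrite (bigD1 l) //= big1 ?addr0; last first.
    by move=> i hi; rewrite (negbTE (_ : l != i)) 1?eq_sym //= mulr0.
  rewrite !eqxx /= mul1r mulr1.
  case: (ltngtP k l) => hkl.
  - by rewrite add0r -{1}hT mxE.
  - by rewrite addr0.
  - have -> : k = l by apply: val_inj.
    by rewrite hd addr0.
rewrite eT /Lambda2 linear_sum /=; apply: summx_sub => i _.
exact: (lam_gen (delta_mx i 0) (row i L)^T).
Qed.

Lemma lam_surj g n (M : 'M['F_2]_(g + g)) : (0 < n)%N -> Lambda2 M ->
  exists2 Y, Igusa (2 ^+ n) Y & psiF (2 ^+ n) Y = M.
Proof.
move=> hn hM.
pose P (r : 'rV['F_2]_((g + g) * (g + g))) :=
  exists2 Y, Igusa (2 ^+ n) Y & mxvec (psiF (2 ^+ n) Y) = r.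
have P0 : P 0.
  have [h1 h2] := igusa1 g hn.
  by exists 1%:M => //; rewrite h2 linear0.
have PD : forall r s, P r -> P s -> P (r + s).
  move=> r s [Y hY <-] [Z hZ <-]; exists (Y *m Z); first exact: igusaM.
  by rewrite psi_hom //; [rewrite linearD | exact: hY.1 | exact: hZ.1].
have PG : forall (u v : Umod g) (a : 'F_2), P (a *: mxvec (u *m v^T + v *m u^T)).
  move=> u v a; have [Y hY e] := gen (a *: u) v hn.
  exists Y => //; rewrite e -linearZ /=; congr mxvec.
  by rewrite scalerDr scalemxAl linearZ /= scalemxAr.
have Pin : forall u r, (r <= \sum_(v : Umod g) <<mxvec (u *m v^T + v *m u^T)>>)%MS -> P r.
  move=> u r /sub_sumsmxP [c ->].
  elim/big_rec: _ => // v s _ Ps; apply: PD Ps.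
  set x := mxvec _.
  have h : (c v *m <<x>> <= x)%MS by rewrite (submx_trans (submxMl _ _)) // genmxE.
  by case/sub_rVP: h => a ->; exact: PG.
have : P (mxvec M).
  move: hM; rewrite /Lambda2 => /sub_sumsmxP [c ->].
  elim/big_rec: _ => // u s _ Ps; apply: PD Ps; apply: (Pin u); exact: submxMl.
by case=> Y hY /(can_inj mxvecK) e; exists Y.
Qed.

Unset Implicit Arguments.

Theorem proposition5p2 (g n : nat) (hg : (0 < g)%N) (hn : (0 < n)%N) :
  (* Gamma(2g,2^n) / Gamma(2g,2^n,2^(n+1)) ~= U as Sp(2g,2)-modules *)
  (exists phi : intmx g -> Umod g,
     [/\ (forall Y Z, Gamma (2 ^+ n) Y -> Gamma (2 ^+ n) Z ->
            phi (Y *m Z) = phi Y + phi Z),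
         (forall u : Umod g, exists2 Y, Gamma (2 ^+ n) Y & phi Y = u),
         (forall Y, Gamma (2 ^+ n) Y -> (phi Y = 0 <-> Igusa (2 ^+ n) Y)) &
         (forall X Y, Sp_Z X -> Gamma (2 ^+ n) Y ->
            phi (X *m Y *m invmx X) = red2 X *m phi Y)]) /\
  (* Gamma(2g,2^n,2^(n+1)) / Gamma(2g,2^(n+1)) ~= Lambda^2(U) *)
  (exists psi : intmx g -> 'M['F_2]_(g + g),
     [/\ (forall Y Z, Igusa (2 ^+ n) Y -> Igusa (2 ^+ n) Z ->
            psi (Y *m Z) = psi Y + psi Z),
         (forall Y, Igusa (2 ^+ n) Y -> Lambda2 (psi Y)),
         (forall M, Lambda2 M -> exists2 Y, Igusa (2 ^+ n) Y & psi Y = M),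
         (forall Y, Igusa (2 ^+ n) Y -> (psi Y = 0 <-> Gamma (2 ^+ n.+1) Y)) &
         (forall X Y, Sp_Z X -> Igusa (2 ^+ n) Y ->
            psi (X *m Y *m invmx X) = red2 X *m psi Y *m (red2 X)^T)]).
Proof.
split; first exact: part1.
exists (psiF (2 ^+ n)); split.
- by move=> Y Z hY hZ; apply: psi_hom hY.1 hZ.1.
- move=> Y hY; apply: alt_lam; first exact: psi_sym hY.1.
  exact: (proj1 (igusa_char hn hY.1) hY).
- by move=> M hM; apply: lam_surj.
- by move=> Y hY; apply: psi_ker hY.1.
- by move=> X Y hX hY; apply: psi_conj hY.1.
Qed.
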